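(* Let $m\ge 1$, $M=2^m$, and let $P_{C_0}(0),\ldots,P_{C_{m-1}}(0)\in(0,1)$ be given, with $P_{C_k}(1)=1-P_{C_k}(0)$. Then for all $j,l\in\{0,\ldots,M-1\}$, $$\sum_{i=0}^{M-1}\gamma_{i,l}\gamma_{i,j}=\begin{cases}M,& j=l,\\ 0,& j\neq l,\end{cases}\qquad\text{and}\qquad \sum_{i=0}^{M-1}h_{l,i}\gamma_{i,j}=M\,h_{j,l}\sqrt{P_{j\oplus l}}.$$
   Context: For an integer $0\le i\le M-1$, $n_{i,k}\in\{0,1\}$ denotes the $k$-th bit of its base-2 representation, i.e. $i=\sum_{k=0}^{m-1}n_{i,k}2^k$; for a bit $b$, $\bar b=1-b$. For integers $i,j$, $i\oplus j$ denotes their bitwise exclusive-or. The symbol probabilities are $P_i=\prod_{k=0}^{m-1}P_{C_k}(n_{i,k})$. The Hadamard coefficients are $h_{i,j}=\prod_{k=0}^{m-1}(-1)^{n_{i,k}n_{j,k}}$. The coefficients $\gamma_{i,j}$ are defined by $$\gamma_{i,j}=\prod_{k=0}^{m-1}\Big[(-1)^{\bar n_{i,k}n_{j,k}}\sqrt{P_{C_k}(0)}+(-1)^{n_{i,k}\bar n_{j,k}}\sqrt{P_{C_k}(1)}\Big].$$ *)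

(* Defs.v *)
(* R is an arbitrary real closed field (rcfType), so that
   Num.sqrt is available; the real numbers are an instance. *)
From HB Require Import structures.
From mathcomp Require Import all_boot all_order all_algebra.
Set Implicit Arguments. Unset Strict Implicit. Unset Printing Implicit Defensive.
Import Order.TTheory GRing.Theory Num.Theory.
Local Open Scope ring_scope.

Definition bitn (i k : nat) : bool := odd (i %/ 2 ^ k).

(* P_{C_k}(b), with P_{C_k}(1) = 1 - P_{C_k}(0) and p k = P_{C_k}(0) *)
Definition PC (R : nzRingType) (m : nat) (p : 'I_m -> R) (k : 'I_m) (b : bool) : R :=
  if b then 1 - p k else p k.

Definition Psym (R : nzRingType) (m : nat) (p : 'I_m -> R) (i : nat) : R :=
  \prod_(k < m) PC p k (bitn i k).

Definition had (R : nzRingType) (m : nat) (i j : nat) : R :=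
  \prod_(k < m) (-1) ^+ (bitn i k && bitn j k).

Definition gamma (R : rcfType) (m : nat) (p : 'I_m -> R) (i j : nat) : R :=
  \prod_(k < m)
    ((-1) ^+ (~~ bitn i k && bitn j k) * Num.sqrt (PC p k false)
     + (-1) ^+ (bitn i k && ~~ bitn j k) * Num.sqrt (PC p k true)).

(* Main.v *)
Require Import Defs.
From HB Require Import structures.
From Stdlib Require Import PeanoNat.
From mathcomp Require Import all_boot all_order all_algebra.
From mathcomp Require Import zify ring lra.
Import Order.TTheory GRing.Theory Num.Theory.
Local Open Scope ring_scope.

Lemma divn_Nat a b : (0 < b)%N -> (a %/ b = Nat.div a b)%N.
Proof.
move=> hb. apply: (Nat.div_unique _ _ _ (a %% b)). have:= ltn_pmod a hb. lia.
rewrite {1}(divn_eq a b). lia. Qed.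
Lemma expn_Nat a b : (a ^ b = Nat.pow a b)%N.
Proof. elim: b => [|b IH] //=. rewrite expnS IH. lia. Qed.
Lemma odd_Nat a : odd a = Nat.odd a.
Proof. elim: a => [|a IH] //. rewrite Nat.odd_succ -Nat.negb_odd /= IH //. Qed.

Lemma bitn_testbit a k : bitn a k = Nat.testbit a k.
Proof.
rewrite /bitn divn_Nat ?expn_gt0 // expn_Nat odd_Nat -Nat.bit0_odd Nat.div_pow2_bits //.
Qed.

Lemma bitn_xor a b k : bitn (Nat.lxor a b) k = bitn a k (+) bitn b k.
Proof. by rewrite !bitn_testbit Nat.lxor_spec; case: (Nat.testbit a k); case: (Nat.testbit b k). Qed.

Lemma bitn_lo i n : (i < 2 ^ n)%N -> bitn i n = false.
Proof. by move=> h; rewrite /bitn divn_small. Qed.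

Lemma bitn_hi i n : (i < 2 ^ n)%N -> bitn (2 ^ n + i) n = true.
Proof. by move=> h; rewrite /bitn divnDl // divnn expn_gt0 /= divn_small. Qed.

Lemma bitn_shift i n k : (k < n)%N -> bitn (2 ^ n + i) k = bitn i k.
Proof.
move=> h; rewrite /bitn divnDl ?dvdn_exp2l ?(ltnW h) //.
rewrite -expnB ?(ltnW h) // oddD oddX /=.
have -> : (n - k == 0)%N = false by apply/eqP; lia.
done.
Qed.

Lemma sum_bits (R : comNzRingType) n (G : nat -> bool -> R) :
  \sum_(i < 2 ^ n) \prod_(k < n) G k (bitn i k) =
  \prod_(k < n) (G k false + G k true).
Proof.
elim: n G => [|n IH] G.
  by rewrite expn0 big_ord1 !big_ord0.
rewrite big_ord_recr /= -IH mulrDr !mulr_suml.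
rewrite expnS mul2n -addnn big_split_ord /=.
congr (_ + _); apply: eq_bigr => i _; rewrite big_ord_recr /=.
- rewrite bitn_lo //; congr (_ * _); apply: eq_bigr => k _ //.
- rewrite bitn_hi //; congr (_ * _); apply: eq_bigr => k _.
  by rewrite bitn_shift.
Qed.
Lemma sum_bits_ord (R : comNzRingType) n (F : 'I_n -> bool -> R) :
  \sum_(i < 2 ^ n) \prod_(k < n) F k (bitn i k) =
  \prod_(k < n) (F k false + F k true).
Proof.
case: n F => [|n] F; first by rewrite expn0 big_ord1 !big_ord0.
rewrite (eq_bigr (fun i : 'I_(2 ^ n.+1) => \prod_(k < n.+1) F (inord k) (bitn i k))); last first.
  by move=> i _; apply: eq_bigr => k _; rewrite inord_val.
rewrite (@sum_bits _ n.+1 (fun k b => F (inord k) b)).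
by apply: eq_bigr => k _; rewrite inord_val.
Qed.

Lemma sqrt_prod (R : rcfType) n (f : 'I_n -> R) : (forall k, 0 <= f k) ->
  Num.sqrt (\prod_(k < n) f k) = \prod_(k < n) Num.sqrt (f k).
Proof.
move=> hf.
suff : 0 <= \prod_(k < n) f k /\ Num.sqrt (\prod_(k < n) f k) = \prod_(k < n) Num.sqrt (f k) by case.
elim/big_rec2: _ => [|k x y _ [hx <-]]; first by rewrite sqrtr1.
split; first by rewrite mulr_ge0.
by rewrite sqrtrM.
Qed.

Lemma bits_eq m (j l : 'I_(2 ^ m)) : (forall k : 'I_m, bitn j k = bitn l k) -> j = l.
Proof.
move=> h; apply: val_inj => /=; apply: Nat.bits_inj => n.
rewrite -!bitn_testbit.
case: (ltnP n m) => hn; first exact: (h (Ordinal hn)).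
have hj : (j < 2 ^ n)%N by apply: (leq_trans (ltn_ord j)); rewrite leq_exp2l.
have hl : (l < 2 ^ n)%N by apply: (leq_trans (ltn_ord l)); rewrite leq_exp2l.
by rewrite !bitn_lo.
Qed.

Theorem lemma1 (R : rcfType) (m : nat) (hm : (1 <= m)%N) (p : 'I_m -> R)
    (hp : forall k : 'I_m, 0 < p k < 1) (j l : 'I_(2 ^ m)) :
  (\sum_(i < 2 ^ m) gamma p i l * gamma p i j
     = (if j == l then (2 ^ m)%:R else 0))
  /\
  (\sum_(i < 2 ^ m) had R m l i * gamma p i j
     = (2 ^ m)%:R * had R m j l * Num.sqrt (Psym p (Nat.lxor j l))).
Proof.
have hPC : forall k b, 0 <= PC p k b.
  move=> k b; have /andP[h0 h1] := hp k; rewrite /PC; case: b; last exact: ltW.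
  by rewrite subr_ge0 ltW.
have hsq : forall k, Num.sqrt (PC p k false) * Num.sqrt (PC p k false)
   + Num.sqrt (PC p k true) * Num.sqrt (PC p k true) = 1.
  by move=> k; rewrite -!expr2 !sqr_sqrtr // /PC; ring.
have h2m : (2 ^ m)%:R = \prod_(k < m) (2 : R).
  by rewrite prodr_const card_ord natrX.
split.
  pose g := fun (k : 'I_m) (a b : bool) =>
    (-1) ^+ (~~ a && b) * Num.sqrt (PC p k false) + (-1) ^+ (a && ~~ b) * Num.sqrt (PC p k true).
  rewrite (eq_bigr (fun i : 'I_(2 ^ m) => \prod_(k < m) (fun k a => g k a (bitn l k) * g k a (bitn j k)) k (bitn i k))); last first.
    by move=> i _; rewrite /gamma -big_split.
  rewrite (@sum_bits_ord _ m (fun k a => g k a (bitn l k) * g k a (bitn j k))) /g.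
  case: eqP => [<- | hne].
    rewrite h2m; apply: eq_bigr => k _.
    move: (hsq k); set x := Num.sqrt _; set y := Num.sqrt _ => e.
    by case: (bitn j k) => /=; rewrite ?expr0 ?expr1 ?mul1r ?mulN1r;
      (transitivity (2 * (x * x + y * y)); [ring | rewrite e mulr1]).
  case: (boolP [exists k : 'I_m, bitn j k != bitn l k]) => [/existsP[k hk] | /existsPn hall]; last first.
    exfalso; apply: hne; apply: bits_eq => k; by have := hall k; rewrite negbK => /eqP.
  rewrite (bigD1 k) //= [X in X * _](_ : _ = 0) ?mul0r //.
  move: hk; set x := Num.sqrt _; set y := Num.sqrt _.
  by case: (bitn j k); case: (bitn l k) => //= _; rewrite ?expr0 ?expr1 ?mul1r ?mulN1r; ring.
pose g := fun (k : 'I_m) (a b : bool) =>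
  (-1) ^+ (~~ a && b) * Num.sqrt (PC p k false) + (-1) ^+ (a && ~~ b) * Num.sqrt (PC p k true).
rewrite (eq_bigr (fun i : 'I_(2 ^ m) => \prod_(k < m) (fun (k : 'I_m) a => (-1) ^+ (bitn l k && a) * g k a (bitn j k)) k (bitn i k))); last first.
  by move=> i _; rewrite /gamma /had -big_split.
rewrite (@sum_bits_ord _ m (fun (k : 'I_m) a => (-1) ^+ (bitn l k && a) * g k a (bitn j k))) /g.
rewrite h2m /had /Psym sqrt_prod; last by move=> k; apply: hPC.
rewrite -!big_split /=; apply: eq_bigr => k _.
rewrite bitn_xor.
by case: (bitn j k); case: (bitn l k); rewrite /= /PC ?expr0 ?expr1 ?mul1r ?mulN1r; ring.
Qed.
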